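(* Let $b\ge2$ be an integer, $\lambda\in(1/b,1)$, $k\in\mathbb{Z}_+$, let $\tau$ be a $\mathbb{Z}$-periodic $C^k$ function, let $p\ge2$ be an integer with $\gcd(p,b)=1$, and let $\tilde\tau(x)=\tau(px)$. Then (i) $t\in\mathbb{R}$ is a $C^k$-regulating period of $W^\tau$ if and only if $t/p$ is a $C^k$-regulating period of $W^{\tilde\tau}$; (ii) $\tau$ satisfies condition (H) if and only if $\tilde\tau$ satisfies condition (H).
   Context: $W^\psi(x)=\sum_{n\ge0}\lambda^n\psi(b^nx)$; $t$ is a $C^k$-regulating period of $W^\psi$ if $x\mapsto W^\psi(x+t)-W^\psi(x)$ is $C^k$. With $\Sigma=\{0,\dots,b-1\}^{\mathbb{Z}_+}$, $\gamma=1/(b\lambda)$ and $Y^\psi(x,\mathbf{j})=-\sum_{n\ge1}\gamma^n\psi'\!\left(\frac{x}{b^n}+\frac{j_1}{b^n}+\frac{j_2}{b^{n-1}}+\cdots+\frac{j_n}{b}\right)$, $\psi$ satisfies condition (H) if $Y^\psi(\cdot,\mathbf{j})-Y^\psi(\cdot,\mathbf{i})\not\equiv0$ for all $\mathbf{i}\ne\mathbf{j}\in\Sigma$. *)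

(* Defs.v *)
From Stdlib Require Import Reals Lra Lia.
From Coquelicot Require Import Coquelicot.
Open Scope R_scope.

Definition W (b : nat) (lam : R) (psi : R -> R) (x : R) : R :=
  Series (fun n => lam ^ n * psi (INR b ^ n * x)).

Definition Ck (k : nat) (f : R -> R) : Prop :=
  (forall m : nat, (m < k)%nat -> forall x, ex_derive_n f (S m) x) /\
  (forall x, continuous (Derive_n f k) x).

Definition regulating_period (b : nat) (lam : R) (k : nat) (psi : R -> R) (t : R) : Prop :=
  Ck k (fun x => W b lam psi (x + t) - W b lam psi x).

Definition Zperiodic (f : R -> R) : Prop := forall x, f (x + 1) = f x.

(* Sigma = {0,...,b-1}^{Z_+}; a sequence (j_1, j_2, ...) is encoded as
   j : nat -> nat with j_m = j (m-1). *)
Definition in_Sigma (b : nat) (j : nat -> nat) : Prop := forall m, (j m < b)%nat.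

(* Y^psi(x, j) = - sum_{n>=1} gamma^n psi'(x/b^n + j_1/b^n + ... + j_n/b),
   gamma = 1/(b lam). Index n here stands for n+1 in the paper. *)
Definition Y (b : nat) (lam : R) (psi : R -> R) (x : R) (j : nat -> nat) : R :=
  - Series (fun n =>
      (1 / (INR b * lam)) ^ (S n) *
      Derive psi (x / INR b ^ (S n) +
                  sum_f_R0 (fun m => INR (j m) / INR b ^ (S n - m)) n)).

Definition condH (b : nat) (lam : R) (psi : R -> R) : Prop :=
  forall i j : nat -> nat, in_Sigma b i -> in_Sigma b j -> i <> j ->
    exists x, Y b lam psi x j - Y b lam psi x i <> 0.

(* Main.v *)
Require Import Defs.
From Stdlib Require Import Reals Arith Lra Lia.
From Coquelicot Require Import Coquelicot.
From Stdlib Require Import FunctionalExtensionality ClassicalEpsilon.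
Open Scope nat_scope.

Lemma gcd_pow p b n : Nat.gcd p b = 1 -> Nat.gcd p (b^n) = 1.
Proof.
  intros H. induction n as [|n IH].
  - simpl. rewrite Nat.gcd_comm. reflexivity.
  - simpl. set (d := Nat.gcd p (b * b^n)).
    assert (Hdp : Nat.divide d p) by apply Nat.gcd_divide_l.
    assert (Hdb : Nat.divide d (b * b^n)) by apply Nat.gcd_divide_r.
    assert (Hdb1 : Nat.gcd d b = 1).
    { apply Nat.divide_1_r. rewrite <- H. apply Nat.gcd_greatest.
      - eapply Nat.divide_trans; [apply Nat.gcd_divide_l| exact Hdp].
      - apply Nat.gcd_divide_r. }
    assert (Hdbn : Nat.divide d (b^n)) by (eapply Nat.gauss; eauto).
    apply Nat.divide_1_r. rewrite <- IH. apply Nat.gcd_greatest; auto.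
Qed.

Lemma mod_cancel m p x y : 0 < m -> Nat.gcd m p = 1 -> x < m -> y < m ->
  (p*x) mod m = (p*y) mod m -> x = y.
Proof.
  intros Hm Hg.
  assert (K : forall x y, x <= y -> y < m -> (p*x) mod m = (p*y) mod m -> x = y).
  { clear x y. intros x y Hxy Hy E.
    pose proof (Nat.div_mod_eq (p*x) m) as E1.
    pose proof (Nat.div_mod_eq (p*y) m) as E2.
    assert (Hdiv : Nat.divide m (p * (y - x))).
    { exists ((p*y)/m - (p*x)/m). rewrite Nat.mul_sub_distr_r, Nat.mul_sub_distr_l.
      assert (p*x <= p*y) by nia. nia. }
    apply (Nat.gauss _ _ _ Hdiv) in Hg. destruct Hg as [q Hq].
    destruct q; nia. }
  intros Hx Hy E. destruct (Nat.le_ge_cases x y).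
  - apply K; auto.
  - symmetry. apply K; auto.
Qed.

Lemma mod_sub m c a : (a mod (m*c)) mod m = a mod m.
Proof.
  rewrite Nat.Div0.mod_mul_r. rewrite (Nat.mul_comm m).
  rewrite Nat.Div0.mod_add. apply Nat.Div0.mod_mod.
Qed.

Fixpoint Nn (j : nat -> nat) (b n : nat) : nat :=
  match n with 0 => j 0 | S n' => Nn j b n' + j n * b ^ n end.

Lemma digits b (M : nat -> nat) : 0 < b -> (forall n, M n < b ^ S n) ->
  (forall n, M (S n) mod b ^ S n = M n) ->
  (forall m, M m / b ^ m < b) /\ (forall n, Nn (fun m => M m / b ^ m) b n = M n).
Proof.
  intros Hb Hlt Hc. split.
  - intros m. apply Nat.div_lt_upper_bound.
    + apply Nat.pow_nonzero; lia.
    + specialize (Hlt m). simpl in Hlt. lia.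
  - induction n as [|n IH].
    + simpl. apply Nat.div_1_r.
    + cbn [Nn]. rewrite IH. rewrite <- (Hc n).
      pose proof (Nat.div_mod_eq (M (S n)) (b ^ S n)). lia.
Qed.

Lemma Nn_lt b j n : (forall m, j m < b) -> Nn j b n < b ^ S n.
Proof.
  intros Hj. induction n as [|n IH].
  - simpl. specialize (Hj 0). lia.
  - cbn [Nn]. specialize (Hj (S n)). change (b ^ S (S n)) with (b * b ^ S n). nia.
Qed.

Lemma Nn_inj b i j : 0 < b -> (forall n, Nn i b n = Nn j b n) -> i = j.
Proof.
  intros Hb H. apply functional_extensionality. intros [|n].
  - exact (H 0).
  - pose proof (H (S n)) as E. cbn [Nn] in E. rewrite (H n) in E.
    assert (0 < b ^ S n) by (apply Nat.neq_0_lt_0, Nat.pow_nonzero; lia).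
    apply (Nat.mul_cancel_r _ _ (b ^ S n)); lia.
Qed.

Lemma exists_phi b p j : 0 < b -> (forall m, j m < b) ->
  exists j', (forall m, j' m < b) /\ forall n, Nn j' b n = (p * Nn j b n) mod b ^ S n.
Proof.
  intros Hb Hj.
  set (M := fun n => (p * Nn j b n) mod b ^ S n).
  assert (Hpos : forall n, b ^ n <> 0) by (intros; apply Nat.pow_nonzero; lia).
  destruct (digits b M Hb) as [H1 H2].
  - intros n. apply Nat.mod_upper_bound. auto.
  - intros n. unfold M. change (b ^ S (S n)) with (b * b ^ S n).
    rewrite (Nat.mul_comm b (b ^ S n)). rewrite mod_sub. cbn [Nn].
    rewrite Nat.mul_add_distr_l, Nat.mul_assoc. apply Nat.Div0.mod_add.
  - exists (fun m => M m / b ^ m). split; auto.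
Qed.

Lemma exists_pre b p j : 0 < b -> 0 < p -> Nat.gcd p b = 1 -> (forall m, j m < b) ->
  exists j', (forall m, j' m < b) /\ forall n, Nn j b n = (p * Nn j' b n) mod b ^ S n.
Proof.
  intros Hb Hp Hg Hj.
  assert (Hpos : forall n, b ^ n <> 0) by (intros; apply Nat.pow_nonzero; lia).
  assert (Hq : forall n, exists u, (p * u) mod b ^ S n = 1 mod b ^ S n).
  { intros n. destruct (Nat.gcd_bezout_pos p (b ^ S n) Hp) as [u [v Huv]].
    rewrite gcd_pow in Huv by auto. exists u. rewrite Nat.mul_comm, Huv.
    rewrite Nat.Div0.mod_add. reflexivity. }
  set (q := fun n => proj1_sig (constructive_indefinite_description _ (Hq n))).
  assert (Hqn : forall n, (p * q n) mod b ^ S n = 1 mod b ^ S n).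
  { intros n. unfold q. destruct (constructive_indefinite_description _ (Hq n)); auto. }
  set (M := fun n => (q n * Nn j b n) mod b ^ S n).
  assert (HM : forall n, (p * M n) mod b ^ S n = Nn j b n).
  { intros n. unfold M. rewrite Nat.Div0.mul_mod_idemp_r. rewrite Nat.mul_assoc.
    rewrite Nat.Div0.mul_mod, Hqn, <- Nat.Div0.mul_mod, Nat.mul_1_l.
    apply Nat.mod_small. apply Nn_lt; auto. }
  assert (Hlt : forall n, M n < b ^ S n) by (intros; apply Nat.mod_upper_bound; auto).
  destruct (digits b M Hb) as [H1 H2]; auto.
  - intros n. apply (mod_cancel (b ^ S n) p).
    + apply Nat.neq_0_lt_0; auto.
    + rewrite Nat.gcd_comm. apply gcd_pow; auto.
    + apply Nat.mod_upper_bound; auto.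
    + auto.
    + rewrite HM. rewrite Nat.Div0.mul_mod_idemp_r.
      rewrite <- (mod_sub (b ^ S n) b (p * M (S n))). rewrite (Nat.mul_comm _ b).
      change (b * b ^ S n) with (b ^ S (S n)). rewrite HM.
      cbn [Nn]. rewrite Nat.Div0.mod_add. apply Nat.mod_small, Nn_lt; auto.
  - exists (fun m => M m / b ^ m). split; auto.
    intros n. rewrite H2. symmetry; auto.
Qed.
Open Scope R_scope.

Lemma INR_Nn j b n : INR (Nn j b n) = sum_f_R0 (fun m => INR (j m) * INR b ^ m) n.
Proof.
  induction n as [|n IH].
  - simpl. ring.
  - cbn [Nn sum_f_R0]. rewrite plus_INR, mult_INR, pow_INR, IH. ring.
Qed.

Lemma sum_Nn j b n : (0 < b)%nat ->
  sum_f_R0 (fun m => INR (j m) / INR b ^ (S n - m)) n = INR (Nn j b n) / INR b ^ (S n).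
Proof.
  intros Hb. assert (HB : INR b <> 0) by (apply not_0_INR; lia).
  rewrite INR_Nn. unfold Rdiv at 2. rewrite Rmult_comm, scal_sum.
  apply sum_eq. intros m Hm.
  replace (INR b ^ S n) with (INR b ^ m * INR b ^ (S n - m)).
  2:{ rewrite <- pow_add. f_equal. lia. }
  field. split; apply pow_nonzero; auto.
Qed.

Lemma Derive_per tau : Zperiodic tau -> forall y, Derive tau (y + 1) = Derive tau y.
Proof.
  intros Hp y. unfold Derive. f_equal. f_equal. apply functional_extensionality.
  intros h. replace (y + 1 + h) with ((y + h) + 1) by ring. rewrite !Hp. reflexivity.
Qed.

Lemma Derive_per_n tau : Zperiodic tau -> forall z y, Derive tau (y + INR z) = Derive tau y.
Proof.
  intros Hp z. induction z as [|z IH]; intros y.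
  - simpl. rewrite Rplus_0_r. reflexivity.
  - rewrite S_INR. replace (y + (INR z + 1)) with ((y + INR z) + 1) by ring.
    rewrite Derive_per; auto.
Qed.

Lemma Derive_scale tau c y : ex_derive tau (c * y) ->
  Derive (fun x => tau (c * x)) y = c * Derive tau (c * y).
Proof.
  intros H. rewrite (Derive_comp tau (fun x => c * x)); auto.
  - rewrite Derive_scal, Derive_id. ring.
  - apply ex_derive_scal, ex_derive_id.
Qed.

Lemma Y_rel b lam tau p j j' : (0 < b)%nat -> Zperiodic tau -> (forall y, ex_derive tau y) ->
  (forall n, Nn j' b n = ((p * Nn j b n) mod b ^ S n)%nat) ->
  forall x, Y b lam (fun x => tau (INR p * x)) x j = INR p * Y b lam tau (INR p * x) j'.
Proof.
  intros Hb Hper Hd HN x. unfold Y.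
  assert (HB : INR b <> 0) by (apply not_0_INR; lia).
  rewrite Ropp_mult_distr_r_reverse. f_equal. rewrite <- Series_scal_l.
  apply Series_ext. intros n. rewrite !sum_Nn by auto.
  rewrite Derive_scale by auto.
  set (m := (b ^ S n)%nat).
  pose proof (Nat.div_mod_eq (p * Nn j b n) m) as E.
  rewrite <- HN in E.
  assert (ER : INR p * INR (Nn j b n) = INR m * INR ((p * Nn j b n) / m) + INR (Nn j' b n)).
  { rewrite <- mult_INR, <- mult_INR, <- plus_INR. f_equal. exact E. }
  assert (Hm : INR m = INR b ^ S n) by (unfold m; rewrite pow_INR; reflexivity).
  replace (INR p * (x / INR b ^ S n + INR (Nn j b n) / INR b ^ S n)) with
    ((INR p * x / INR b ^ S n + INR (Nn j' b n) / INR b ^ S n) + INR ((p * Nn j b n) / m)).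
  2:{ rewrite <- Hm. assert (INR m <> 0) by (rewrite Hm; apply pow_nonzero; auto).
      replace (INR (Nn j' b n)) with (INR p * INR (Nn j b n) - INR m * INR ((p * Nn j b n) / m)) by lra.
      field; auto. }
  rewrite Derive_per_n by auto. ring.
Qed.

Lemma Ck_scale k G c : c <> 0 -> Ck k G -> Ck k (fun x => G (c * x)).
Proof.
  intros Hc [H1 H2]. split.
  - intros m Hm x. apply ex_derive_n_comp_scal. apply filter_forall.
    intros y [|l] Hl; [exact I|]. apply H1; lia.
  - assert (E : Derive_n (fun y => G (c * y)) k = fun x => c ^ k * Derive_n G k (c * x)).
    { apply functional_extensionality. intros x. apply Derive_n_comp_scal.
      apply filter_forall. intros y [|l] Hl; [exact I|]. apply H1; lia. }
    rewrite E. intros x.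
    apply (continuous_comp (fun x => c * x) (fun y => c ^ k * Derive_n G k y)).
    + apply (continuous_mult (fun _ => c) (fun y => y)).
      * apply continuous_const.
      * apply continuous_id.
    + apply (continuous_mult (fun _ => c ^ k) (Derive_n G k)).
      * apply continuous_const.
      * apply H2.
Qed.

Lemma Ck_scale_iff k G c : c <> 0 -> (Ck k G <-> Ck k (fun x => G (c * x))).
Proof.
  intros Hc. split; [apply Ck_scale; auto|].
  intros H. apply (Ck_scale _ _ (/ c)) in H; [|apply Rinv_neq_0_compat; auto].
  replace G with (fun x => G (c * (/ c * x))); auto.
  apply functional_extensionality. intros x. f_equal. field. auto.
Qed.

Theorem mainTheorem9 (b : nat) (lam : R) (k : nat) (tau : R -> R) (p : nat) :
  (2 <= b)%nat ->
  1 / INR b < lam < 1 ->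
  (1 <= k)%nat ->
  Zperiodic tau ->
  Ck k tau ->
  (2 <= p)%nat ->
  Nat.gcd p b = 1%nat ->
  (forall t : R,
     regulating_period b lam k tau t <->
     regulating_period b lam k (fun x => tau (INR p * x)) (t / INR p)) /\
  (condH b lam tau <-> condH b lam (fun x => tau (INR p * x))).
Proof.
  intros Hb Hlam Hk Hper HCk Hp Hg.
  assert (HP : INR p <> 0) by (apply not_0_INR; lia).
  assert (Hb0 : (0 < b)%nat) by lia.
  split.
  - intros t. unfold regulating_period.
    assert (EW : forall x, W b lam (fun x => tau (INR p * x)) x = W b lam tau (INR p * x)).
    { intros x. unfold W. apply Series_ext. intros n. f_equal. f_equal. ring. }
    set (G := fun y => W b lam tau (y + t) - W b lam tau y).
    assert (EF : (fun x => W b lam (fun x0 => tau (INR p * x0)) (x + t / INR p) -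
                      W b lam (fun x0 => tau (INR p * x0)) x) = (fun x => G (INR p * x))).
    { apply functional_extensionality. intros x. unfold G. rewrite !EW.
      replace (INR p * (x + t / INR p)) with (INR p * x + t) by (field; auto). reflexivity. }
    rewrite EF. exact (Ck_scale_iff k G (INR p) HP).
  - assert (Hd : forall y, ex_derive tau y).
    { intros y. destruct HCk as [H1 _]. exact (H1 0%nat ltac:(lia) y). }
    split.
    + intros H i j Hi Hj Hne.
      destruct (exists_phi b p i Hb0 Hi) as [i' [Hi' Ni]].
      destruct (exists_phi b p j Hb0 Hj) as [j' [Hj' Nj]].
      assert (Hne' : i' <> j').
      { intros E. subst j'. apply Hne. apply (Nn_inj b); auto. intros n.
        apply (mod_cancel (b ^ S n) p).
        - apply Nat.neq_0_lt_0, Nat.pow_nonzero; lia.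
        - rewrite Nat.gcd_comm. apply gcd_pow; auto.
        - apply Nn_lt; auto.
        - apply Nn_lt; auto.
        - rewrite <- Ni, <- Nj. reflexivity. }
      destruct (H i' j' Hi' Hj' Hne') as [x0 Hx0].
      exists (x0 / INR p).
      rewrite (Y_rel b lam tau p j j' Hb0 Hper Hd Nj), (Y_rel b lam tau p i i' Hb0 Hper Hd Ni).
      replace (INR p * (x0 / INR p)) with x0 by (field; auto).
      rewrite <- Rmult_minus_distr_l. apply Rmult_integral_contrapositive; auto.
    + intros H i j Hi Hj Hne.
      destruct (exists_pre b p i Hb0 ltac:(lia) Hg Hi) as [i' [Hi' Ni]].
      destruct (exists_pre b p j Hb0 ltac:(lia) Hg Hj) as [j' [Hj' Nj]].
      assert (Hne' : i' <> j').
      { intros E. subst j'. apply Hne. apply (Nn_inj b); auto. intros n.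
        rewrite Ni, Nj. reflexivity. }
      destruct (H i' j' Hi' Hj' Hne') as [x Hx].
      exists (INR p * x).
      rewrite (Y_rel b lam tau p j' j Hb0 Hper Hd Nj),
              (Y_rel b lam tau p i' i Hb0 Hper Hd Ni) in Hx.
      intros E. apply Hx. rewrite <- Rmult_minus_distr_l, E. ring.
Qed.
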